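(* ${\bf KB^\boxdot}$ is strongly complete with respect to the class of quasi-symmetric bimodal frames: every ${\bf KB^\boxdot}$-consistent set of $\mathcal{L}(\boxdot)$-formulas is satisfiable at some state of some quasi-symmetric bimodal model.
   Context: Fix a nonempty set $\mathbf{P}$ of propositional variables. A bimodal model is $\langle S,R_1,R_2,V\rangle$ with $S$ nonempty, $R_1,R_2\subseteq S\times S$, $V:\mathbf{P}\to\mathcal{P}(S)$. It is quasi-symmetric if for all $i,j\in\{1,2\}$ and all $s,t\in S$ such that $tR_ju$ for some $u\in S$, $sR_it$ implies $tR_is$. $\mathcal{L}(\boxdot):\ \phi::=p\mid\neg\phi\mid(\phi\wedge\phi)\mid\boxdot\phi$. Truth: $\mathcal{M},s\vDash\boxdot\phi$ iff for all $t,u$ with $sR_1t$ and $sR_2u$, ($\mathcal{M},t\vDash\phi\iff\mathcal{M},u\vDash\phi$); atoms and Booleans as usual. ${\bf K^\boxdot}$ has axioms: all instances of propositional tautologies; $\boxdot\top$; $\boxdot\phi\leftrightarrow\boxdot\neg\phi$; $\boxdot\phi\wedge\boxdot\psi\to\boxdot(\phi\wedge\psi)$; $\boxdot\phi\to\boxdot(\phi\vee\psi)\vee\boxdot(\neg\phi\vee\chi)$; rules: modus ponens and RE: from $\phi\leftrightarrow\psi$ infer $\boxdot\phi\leftrightarrow\boxdot\psi$. ${\bf KB^\boxdot}$ is ${\bf K^\boxdot}$ plus the axiom schema $\phi\to\boxdot((\boxdot\phi\wedge\boxdot(\phi\to\psi)\wedge\neg\boxdot\psi)\to\chi)$. A set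 is consistent if no finite conjunction of its members has a provable negation. *)

(* Defs.v *)
From Stdlib Require Import List.
Import ListNotations.

Inductive form (P : Type) : Type :=
| Var : P -> form P
| Neg : form P -> form P
| And : form P -> form P -> form P
| Bd  : form P -> form P.

Arguments Var {P} _.
Arguments Neg {P} _.
Arguments And {P} _ _.
Arguments Bd {P} _.

Section Abbrev.
Context {P : Type}.
Definition Or (a b : form P) : form P := Neg (And (Neg a) (Neg b)).
Definition Imp (a b : form P) : form P := Neg (And a (Neg b)).
Definition Iff (a b : form P) : form P := And (Imp a b) (Imp b a).
(* top is defined from a fixed propositional variable p0 (P is nonempty) *)
Definition Top (p0 : P) : form P := Neg (And (Var p0) (Neg (Var p0))).

(* Instances of propositional tautologies: true under every Boolean
   assignment to formulas respecting negation and conjunction (boxdot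
   formulas and atoms are treated as propositional atoms). *)
Definition tautology (phi : form P) : Prop :=
  forall v : form P -> bool,
    (forall a, v (Neg a) = negb (v a)) ->
    (forall a b, v (And a b) = andb (v a) (v b)) ->
    v phi = true.

Fixpoint conj_list (p0 : P) (l : list (form P)) : form P :=
  match l with
  | [] => Top p0
  | a :: l' => And a (conj_list p0 l')
  end.
End Abbrev.

Inductive KBprov {P : Type} (p0 : P) : form P -> Prop :=
| ax_taut : forall phi, tautology phi -> KBprov p0 phi
| ax_top : KBprov p0 (Bd (Top p0))
| ax_neg : forall phi, KBprov p0 (Iff (Bd phi) (Bd (Neg phi)))
| ax_and : forall phi psi,
    KBprov p0 (Imp (And (Bd phi) (Bd psi)) (Bd (And phi psi)))
| ax_split : forall phi psi chi,
    KBprov p0 (Imp (Bd phi) (Or (Bd (Or phi psi)) (Bd (Or (Neg phi) chi))))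
| ax_B : forall phi psi chi,
    KBprov p0 (Imp phi
      (Bd (Imp (And (And (Bd phi) (Bd (Imp phi psi))) (Neg (Bd psi))) chi)))
| r_mp : forall phi psi, KBprov p0 (Imp phi psi) -> KBprov p0 phi -> KBprov p0 psi
| r_RE : forall phi psi, KBprov p0 (Iff phi psi) -> KBprov p0 (Iff (Bd phi) (Bd psi)).

Definition KBconsistent {P : Type} (p0 : P) (Gamma : form P -> Prop) : Prop :=
  forall l : list (form P), (forall a, In a l -> Gamma a) ->
    ~ KBprov p0 (Neg (conj_list p0 l)).

Record model (P : Type) : Type := {
  st : Type;
  st_inh : inhabited st;
  R1 : st -> st -> Prop;
  R2 : st -> st -> Prop;
  V : P -> st -> Prop
}.

Arguments st {P} _.
Arguments R1 {P} _ _ _.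
Arguments R2 {P} _ _ _.
Arguments V {P} _ _ _.

Definition Rel {P : Type} (M : model P) (i : bool) : st M -> st M -> Prop :=
  if i then R1 M else R2 M.

Definition quasi_symmetric {P : Type} (M : model P) : Prop :=
  forall (i j : bool) (s t : st M),
    (exists u, Rel M j t u) -> Rel M i s t -> Rel M i t s.

Fixpoint sat {P : Type} (M : model P) (s : st M) (phi : form P) : Prop :=
  match phi with
  | Var p => V M p s
  | Neg a => ~ sat M s a
  | And a b => sat M s a /\ sat M s b
  | Bd a => forall t u, R1 M s t -> R2 M s u -> (sat M t a <-> sat M u a)
  end.

(* Main.v *)
Require Import Defs.
From Stdlib Require Import List Classical ClassicalEpsilon.
From mathcomp Require classical_sets.
Import ListNotations.

Lemma zorn_sets (T : Type) (Pr : (T -> Prop) -> Prop) :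
  (forall F : (T -> Prop) -> Prop, (forall A, F A -> Pr A) ->
     (forall A B, F A -> F B -> (forall x, A x -> B x) \/ (forall x, B x -> A x)) ->
     Pr (fun x => exists2 A, F A & A x)) ->
  exists A, Pr A /\ forall B, (forall x, A x -> B x) -> (exists x, B x /\ ~ A x) -> ~ Pr B.
Proof.
intros H.
destruct (classical_sets.Zorn_bigcup (T:=T) (P:=Pr)) as [A [HA HM]].
- intros F HF Ht. apply H; [exact HF| exact Ht].
- exists A; split; [exact HA|]. intros B HAB [x [Bx nAx]] PB.
  apply (HM B); [|exact PB]. split; [exact HAB|]. intros HBA. apply nAx, HBA, Bx.
Qed.

Section Main.
Context {P : Type} (p0 : P).
Notation prv := (KBprov p0).
Notation cj := (conj_list p0).

Ltac taut := unfold tautology; intros v hN hA; unfold Iff in *; unfold Imp, Or, Top in *;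
  cbn [conj_list] in *; repeat (rewrite hN || rewrite hA);
  repeat match goal with |- context [v ?x] => destruct (v x) end; reflexivity.

Lemma mp1 a b : prv a -> tautology (Imp a b) -> prv b.
Proof. intros H T. eapply r_mp; [apply ax_taut, T | exact H]. Qed.
Lemma mp2 a b c : prv a -> prv b -> tautology (Imp a (Imp b c)) -> prv c.
Proof. intros Ha Hb T. eapply r_mp; [eapply r_mp; [apply ax_taut, T| exact Ha]| exact Hb]. Qed.
Lemma mp3 a b c d : prv a -> prv b -> prv c -> tautology (Imp a (Imp b (Imp c d))) -> prv d.
Proof. intros Ha Hb Hc T. eapply r_mp; [eapply r_mp; [eapply r_mp; [apply ax_taut, T| exact Ha]| exact Hb]|exact Hc]. Qed.

Definition cons (X : form P -> Prop) := KBconsistent p0 X.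
Definition add (X : form P -> Prop) (f : form P) := fun x => X x \/ x = f.
Definition mcs X := cons X /\ forall f, cons (add X f) -> X f.

Lemma extract Z f l : (forall a, In a l -> add Z f a) ->
  exists l', (forall a, In a l' -> Z a) /\ prv (Imp (And (cj l') f) (cj l)).
Proof.
induction l as [|a l IH]; intros H.
- exists []. split. intros a []. apply ax_taut. taut.
- destruct IH as [l' [H1 H2]]. intros x Hx; apply H; right; exact Hx.
  destruct (H a (or_introl eq_refl)) as [Za| -> ].
  + exists (a::l'). split. intros x [ <- | Hx]; auto. apply (mp1 _ _ H2). taut.
  + exists l'. split; auto. apply (mp1 _ _ H2). taut.
Qed.

Lemma conj_app l1 l2 : prv (Imp (cj (l1++l2)) (And (cj l1) (cj l2))).
Proof.
induction l1 as [|a l1 IH]; simpl. apply ax_taut; taut. apply (mp1 _ _ IH); taut.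
Qed.

Lemma cons_sub Z W : cons Z -> (forall x, W x -> Z x) -> cons W.
Proof. unfold cons, KBconsistent; intros H S l Hl; apply H; intros; apply S, Hl; auto. Qed.

Lemma incons_add X f : ~ cons (add X f) ->
  exists l, (forall a, In a l -> X a) /\ prv (Neg (And (cj l) f)).
Proof.
intros H. unfold cons, KBconsistent in H. apply not_all_ex_not in H as [l H].
apply imply_to_and in H as [Hl Hp]. apply NNPP in Hp.
destruct (extract X f l Hl) as [l' [H1 H2]]. exists l'; split; auto.
apply (mp2 _ _ _ H2 Hp). taut.
Qed.

Section MCS.
Variable X : form P -> Prop.
Hypothesis HX : mcs X.

Lemma mcs_cons_add f : ~ X f -> ~ cons (add X f).
Proof. intros H C; apply H, (proj2 HX), C. Qed.

Lemma mcs_prv f : prv f -> X f.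
Proof.
intros Hf. destruct (classic (X f)) as [|H]; auto. exfalso.
destruct (incons_add _ _ (mcs_cons_add _ H)) as [l [Hl Hp]].
apply ((proj1 HX) l Hl). apply (mp2 _ _ _ Hf Hp). taut.
Qed.

Lemma mcs_mp a b : X (Imp a b) -> X a -> X b.
Proof.
intros Hab Ha. destruct (classic (X b)) as [|H]; auto. exfalso.
destruct (incons_add _ _ (mcs_cons_add _ H)) as [l [Hl Hp]].
apply ((proj1 HX) (Imp a b :: a :: l)).
- intros x [ <- | [ <- | Hx]]; auto.
- apply (mp1 _ _ Hp). taut.
Qed.

Lemma mcs_not f : X f -> X (Neg f) -> False.
Proof.
intros H1 H2. apply ((proj1 HX) [f; Neg f]).
- intros x [ <- | [ <- | []]]; auto.
- apply ax_taut; taut.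
Qed.

Lemma mcs_em f : X f \/ X (Neg f).
Proof.
destruct (classic (X f)) as [|H1]; auto. destruct (classic (X (Neg f))) as [|H2]; auto.
exfalso.
destruct (incons_add _ _ (mcs_cons_add _ H1)) as [l1 [Hl1 Hp1]].
destruct (incons_add _ _ (mcs_cons_add _ H2)) as [l2 [Hl2 Hp2]].
apply ((proj1 HX) (l1 ++ l2)).
- intros x Hx; apply in_app_or in Hx as [Hx|Hx]; auto.
- apply (mp3 _ _ _ _ Hp1 Hp2 (conj_app l1 l2)). taut.
Qed.

Lemma mcs_prv1 a b : X a -> prv (Imp a b) -> X b.
Proof. intros Ha H. exact (mcs_mp _ _ (mcs_prv _ H) Ha). Qed.
Lemma mcs_taut1 a b : X a -> tautology (Imp a b) -> X b.
Proof. intros Ha H. exact (mcs_prv1 _ _ Ha (ax_taut _ _ H)). Qed.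
Lemma mcs_taut2 a b c : X a -> X b -> tautology (Imp a (Imp b c)) -> X c.
Proof. intros Ha Hb H. exact (mcs_mp _ _ (mcs_taut1 _ _ Ha H) Hb). Qed.

Lemma mcs_neg f : X (Neg f) <-> ~ X f.
Proof.
split. intros H1 H2; exact (mcs_not _ H2 H1).
intros H; destruct (mcs_em f); tauto.
Qed.

Lemma mcs_and a b : X (And a b) <-> X a /\ X b.
Proof.
split. intros H; split; apply (mcs_taut1 _ _ H); taut.
intros [Ha Hb]; apply (mcs_taut2 _ _ _ Ha Hb); taut.
Qed.

Lemma mcs_or a b : X (Or a b) -> X a \/ X b.
Proof.
intros H. destruct (mcs_em a) as [|Ha]; auto. right.
apply (mcs_taut2 _ _ _ H Ha); taut.
Qed.

Lemma bd_re a b : prv (Iff a b) -> X (Bd a) -> X (Bd b).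
Proof. intros H Ha. apply (mcs_prv1 _ _ Ha). apply (mp1 _ _ (r_RE _ _ _ H)); taut. Qed.
Lemma bd_re_taut a b : tautology (Iff a b) -> X (Bd a) -> X (Bd b).
Proof. intros H; apply bd_re, ax_taut, H. Qed.

Lemma bd_neg a : X (Bd a) -> X (Bd (Neg a)).
Proof. intros H. apply (mcs_taut2 _ _ _ (mcs_prv _ (ax_neg _ a)) H); taut. Qed.
Lemma bd_neg' a : X (Bd (Neg a)) -> X (Bd a).
Proof. intros H. apply (mcs_taut2 _ _ _ (mcs_prv _ (ax_neg _ a)) H); taut. Qed.
Lemma bd_and a b : X (Bd a) -> X (Bd b) -> X (Bd (And a b)).
Proof. intros Ha Hb. apply (mcs_mp _ _ (mcs_prv _ (ax_and _ a b))). apply mcs_and; auto. Qed.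
Lemma bd_split a b c : X (Bd a) -> X (Bd (Or a b)) \/ X (Bd (Or (Neg a) c)).
Proof. intros H. apply mcs_or. exact (mcs_mp _ _ (mcs_prv _ (ax_split _ a b c)) H). Qed.
Lemma bd_top : X (Bd (Top p0)).
Proof. apply mcs_prv, ax_top. Qed.

Definition lam c f := X (Bd f) /\ X (Bd (Or f c)).

Lemma key_contra a c : X (Bd (Or a c)) -> X (Bd (Or (Neg a) c)) -> X (Bd c).
Proof. intros H1 H2. apply (bd_re_taut (And (Or a c) (Or (Neg a) c)) c); [taut| apply bd_and; auto]. Qed.

Lemma lam_mono c a b : ~ X (Bd c) -> lam c a -> prv (Imp a b) -> lam c b.
Proof.
intros Hc [H1 H2] H. split.
- destruct (bd_split a b c H1) as [H3|H3].
  + apply (bd_re (Or a b)); [apply (mp1 _ _ H); taut | exact H3].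
  + exfalso; apply Hc, (key_contra a); auto.
- destruct (bd_split (Or a c) b c H2) as [H3|H3].
  + apply (bd_re (Or (Or a c) b)); [apply (mp1 _ _ H); taut | exact H3].
  + exfalso; apply Hc, (key_contra a); auto. apply (bd_re_taut (Or (Neg (Or a c)) c)); [taut|exact H3].
Qed.

Lemma lam_and c a b : lam c a -> lam c b -> lam c (And a b).
Proof.
intros [H1 H2] [H3 H4]. split. apply bd_and; auto.
apply (bd_re_taut (And (Or a c) (Or b c))); [taut| apply bd_and; auto].
Qed.

Lemma lam_top c : lam c (Top p0).
Proof. split. apply bd_top. apply (bd_re_taut (Top p0)); [taut| apply bd_top]. Qed.

Lemma lam_conj c l : (forall a, In a l -> lam c a) -> lam c (cj l).
Proof.
induction l as [|a l IH]; intros H; simpl. apply lam_top.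
apply lam_and. apply H; left; auto. apply IH; intros; apply H; right; auto.
Qed.

Lemma lam_cons c f : ~ X (Bd c) -> ~ X (Bd f) ->
  cons (add (lam c) f) /\ cons (add (lam c) (Neg f)).
Proof.
intros Hc Hf. split; intros l Hl Hp.
- destruct (extract _ _ l Hl) as [l' [H1 H2]].
  assert (L := lam_conj c l' H1).
  assert (Q : prv (Imp (cj l') (Neg f))) by (apply (mp2 _ _ _ H2 Hp); taut).
  assert (L2 := lam_mono c _ (Neg f) Hc L Q).
  apply Hf, bd_neg', (proj1 L2).
- destruct (extract _ _ l Hl) as [l' [H1 H2]].
  assert (L := lam_conj c l' H1).
  assert (Q : prv (Imp (cj l') (Neg (Neg f)))) by (apply (mp2 _ _ _ H2 Hp); taut).
  assert (L2 := lam_mono c _ (Neg (Neg f)) Hc L Q).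
  apply Hf, bd_neg', bd_neg', (proj1 L2).
Qed.

End MCS.

Lemma chain_list (Y : form P -> Prop) (F : (form P -> Prop) -> Prop) :
  (forall A B, F A -> F B -> (forall x, A x -> B x) \/ (forall x, B x -> A x)) ->
  forall l, (forall a, In a l -> Y a \/ exists2 A, F A & A a) ->
  (forall a, In a l -> Y a) \/ exists A, F A /\ forall a, In a l -> Y a \/ A a.
Proof.
intros Hch l. induction l as [|a l IH]; intros H.
- left; intros a [].
- destruct IH as [IH|[A [FA HA]]]. intros; apply H; right; auto.
  + destruct (H a (or_introl eq_refl)) as [Ya|[A0 FA0 A0a]].
    * left; intros x [ <- | Hx]; auto.
    * right; exists A0; split; auto. intros x [ <- | Hx]; auto.
  + destruct (H a (or_introl eq_refl)) as [Ya|[A0 FA0 A0a]].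
    * right; exists A; split; auto. intros x [ <- | Hx]; auto.
    * destruct (Hch A A0 FA FA0) as [S|S].
      -- right; exists A0; split; auto. intros x [ <- | Hx]; auto.
         destruct (HA x Hx); auto.
      -- right; exists A; split; auto. intros x [ <- | Hx]; auto.
Qed.

Lemma lindenbaum Y : cons Y -> exists X, mcs X /\ forall x, Y x -> X x.
Proof.
intros HY.
destruct (zorn_sets (form P) (fun A => cons (fun x => Y x \/ A x))) as [A [HA HM]].
- intros F HF Hch l Hl.
  destruct (chain_list Y F Hch l Hl) as [H|[A [FA H]]].
  + apply HY; auto.
  + apply (HF A FA l H).
- exists (fun x => Y x \/ A x). split; [split|].
  + exact HA.
  + intros f Hf. destruct (classic (A f)) as [|nA]; [right; auto|].
    exfalso. apply (HM (fun x => A x \/ x = f)).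
    * intros; left; auto.
    * exists f; split; auto.
    * apply (cons_sub _ _ Hf). intros x [Yx|[Ax| -> ]]; unfold add; auto.
  + intros; left; auto.
Qed.

Definition W := {X : form P -> Prop | mcs X}.
Definition cc (s : W) : form P :=
  epsilon (inhabits (Var p0)) (fun c => ~ proj1_sig s (Bd c)).
Definition Rc (s t : W) : Prop :=
  ~ proj1_sig s (Bd (cc s)) /\ forall f, lam (proj1_sig s) (cc s) f -> proj1_sig t f.
Definition Vc (p : P) (s : W) : Prop := proj1_sig s (Var p).

Definition Mc (w : W) : model P :=
  {| st := W; st_inh := inhabits w; R1 := Rc; R2 := Rc; V := Vc |}.

Lemma cc_spec s : (exists c, ~ proj1_sig s (Bd c)) -> ~ proj1_sig s (Bd (cc s)).
Proof. intros H. exact (epsilon_spec (inhabits (Var p0)) _ H). Qed.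

Lemma lind_W Y : cons Y -> exists w : W, forall x, Y x -> proj1_sig w x.
Proof. intros H. destruct (lindenbaum Y H) as [X [HX S]]. exists (exist _ X HX); auto. Qed.

Lemma succ_char (s w : W) f : proj1_sig s (Bd f) -> Rc s w ->
  (proj1_sig w f <-> proj1_sig s (Bd (Or f (cc s)))).
Proof.
intros Hs [Hc Hl]. assert (HS := proj2_sig s). assert (HW := proj2_sig w).
split.
- intros Wf. destruct (classic (proj1_sig s (Bd (Or f (cc s))))) as [|H]; auto.
  exfalso. destruct (bd_split _ HS f (cc s) (cc s) Hs) as [H1|H1]; [tauto|].
  apply (mcs_not _ HW f Wf). apply Hl. split; auto. apply bd_neg; auto.
- intros H. apply Hl. split; auto.
Qed.

Lemma truth (w0 : W) f : forall s : st (Mc w0), sat (Mc w0) s f <-> proj1_sig s f.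
Proof.
induction f as [p|f IH|f IH g IHg|f IH]; intros s; simpl.
- reflexivity.
- rewrite IH. symmetry. apply (mcs_neg _ (proj2_sig s)).
- rewrite IH, IHg. symmetry. apply (mcs_and _ (proj2_sig s)).
- assert (HS := proj2_sig s). split.
  + intros H. destruct (classic (proj1_sig s (Bd f))) as [|nB]; auto. exfalso.
    assert (Hc : ~ proj1_sig s (Bd (cc s))) by (apply cc_spec; eauto).
    destruct (lam_cons _ HS (cc s) f Hc nB) as [C1 C2].
    destruct (lind_W _ C1) as [t Ht]. destruct (lind_W _ C2) as [u Hu].
    assert (Rt : Rc s t) by (split; auto; intros; apply Ht; left; auto).
    assert (Ru : Rc s u) by (split; auto; intros; apply Hu; left; auto).
    specialize (H t u Rt Ru). rewrite IH, IH in H.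
    apply (mcs_not _ (proj2_sig u) f).
    apply H, Ht; right; auto. apply Hu; right; auto.
  + intros Hs t u Rt Ru. rewrite IH, IH.
    rewrite (succ_char s t f Hs Rt), (succ_char s u f Hs Ru). reflexivity.
Qed.

Lemma qs_lemma (s t u : W) : Rc t u -> Rc s t -> Rc t s.
Proof.
intros [Htc _] [Hsc Hst]. split; auto. intros g Hg.
assert (HS := proj2_sig s). assert (HT := proj2_sig t).
destruct (classic (proj1_sig s g)) as [|nS]; auto. exfalso.
apply (mcs_neg _ HS) in nS.
set (ct := cc t) in *. set (cs := cc s) in *.
set (A := And (And (Bd (Neg g)) (Bd (Imp (Neg g) ct))) (Neg (Bd ct))).
assert (B1 : proj1_sig s (Bd (Imp A cs))) by
  exact (mcs_mp _ HS _ _ (mcs_prv _ HS _ (ax_B _ (Neg g) ct cs)) nS).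
assert (B2 : proj1_sig s (Bd (Imp A (Neg cs)))) by
  exact (mcs_mp _ HS _ _ (mcs_prv _ HS _ (ax_B _ (Neg g) ct (Neg cs))) nS).
assert (T1 : proj1_sig t (Imp A cs)).
{ apply Hst. split; auto. apply (bd_re_taut _ HS (Imp A cs)); [taut|exact B1]. }
assert (T2 : proj1_sig t (Imp A (Neg cs))).
{ apply Hst. split; auto. apply (bd_re_taut _ HS (Top p0)); [taut| apply bd_top; auto]. }
assert (TA : proj1_sig t A).
{ destruct Hg as [G1 G2]. apply (mcs_and _ HT). split.
  apply (mcs_and _ HT). split. apply bd_neg; auto. exact G2.
  apply (mcs_neg _ HT). exact Htc. }
apply (mcs_not _ HT cs). exact (mcs_mp _ HT _ _ T1 TA). exact (mcs_mp _ HT _ _ T2 TA).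
Qed.

End Main.

Theorem mainTheorem14 (P : Type) (p0 : P) (Gamma : form P -> Prop) :
  KBconsistent p0 Gamma ->
  exists (M : model P) (s : st M),
    quasi_symmetric M /\ forall phi, Gamma phi -> sat M s phi.
Proof.
intros HG. destruct (lind_W p0 Gamma HG) as [w Hw].
exists (Mc p0 w), w. split.
- intros i j s t [u Hu] Hst. destruct i, j; simpl in *; eapply qs_lemma; eauto.
- intros f Hf. apply truth. apply Hw, Hf.
Qed.
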